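(* For all integers $k,d\ge1$ there is a GJ algorithm which, given the entries of a matrix $Z\in\mathbb R^{k\times d}$ as input, outputs the entries of $Z^\dagger Z$ (the orthogonal projection onto the row space of $Z$). This algorithm has degree $O(k)$ and predicate complexity at most $2^k$. Furthermore, if $Z$ is promised to have rank $k$, there is such a GJ algorithm of degree $O(k)$ and predicate complexity $0$.
   Context: $M^\dagger$ denotes the Moore–Penrose pseudo-inverse. A GJ algorithm operates on real-valued inputs and performs only arithmetic operations $v''=v\odot v'$ with $\odot\in\{+,-,\times,\div\}$ and conditional statements ''if $v\ge0$ then ... else ...'', where $v,v'$ are inputs or previously computed values. Every value it computes is a rational function of the inputs; the degree of a rational function is the maximum of the degrees of numerator and denominator in reduced form. The degree of a GJ algorithm is the maximum degree of any rational function of the inputs it computes; its predicate complexity is the number of distinct rational functions appearing in its conditional statements. *)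

(* Defs.v *)
(* R is an abstract realType (MathComp-Analysis reals);
   rational functions of the inputs are represented by pairs of
   multivariate polynomials (multinomials' mpoly). *)
From HB Require Import structures.
From mathcomp Require Import all_boot all_order all_algebra.
From mathcomp Require Import reals.
From mathcomp Require Import mpoly.

Set Implicit Arguments.
Unset Strict Implicit.
Unset Printing Implicit Defensive.

Import Order.TTheory GRing.Theory Num.Theory.
Local Open Scope ring_scope.

(* Moore--Penrose pseudo-inverse (real matrices: transpose = adjoint). *)
Definition is_pinv (R : realType) (m n : nat)
    (A : 'M[R]_(m, n)) (X : 'M[R]_(n, m)) : Prop :=
  [/\ A *m X *m A = A, X *m A *m X = X,
      (A *m X)^T = A *m X & (X *m A)^T = X *m A].

Inductive gj_op := GAdd | GSub | GMul | GDiv.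

(* an operand: an input x_i, or the j-th previously computed value *)
Inductive gj_arg (n : nat) := GIn of 'I_n | GVal of nat.

Inductive gj (n : nat) (O : Type) :=
  | GOut  of (O -> gj_arg n)
  | GStep of gj_op & gj_arg n & gj_arg n & gj n O  (* v_new := a op b; continue *)
  | GIf   of gj_arg n & gj n O & gj n O.            (* if a >= 0 then p1 else p2 *)

Arguments GIn {n}.
Arguments GVal {n}.

Section Semantics.
Variables (R : realType) (n : nat) (O : Type).

Definition gj_get (x : 'I_n -> R) (vs : seq R) (a : gj_arg n) : option R :=
  match a with
  | GIn i => Some (x i)
  | GVal j => if (j < size vs)%N then Some (nth 0 vs j) else None
  end.

Definition gj_apply (o : gj_op) (u v : R) : R :=
  match o with GAdd => u + v | GSub => u - v | GMul => u * v | GDiv => u / v end.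

(* None = runtime error (division by zero or reference to a value not yet
   computed). *)
Fixpoint gj_run (x : 'I_n -> R) (vs : seq R) (p : gj n O)
    : option (O -> option R) :=
  match p with
  | GOut f => Some (fun o => gj_get x vs (f o))
  | GStep o a b p' =>
      match gj_get x vs a, gj_get x vs b with
      | Some u, Some v =>
          if (if o is GDiv then v == 0 else false) then None
          else gj_run x (rcons vs (gj_apply o u v)) p'
      | _, _ => None
      end
  | GIf a p1 p2 =>
      match gj_get x vs a with
      | Some u => if 0 <= u then gj_run x vs p1 else gj_run x vs p2
      | None => None
      end
  end.

Definition ratf := ({mpoly R[n]} * {mpoly R[n]})%type.

Definition gj_sget (vs : seq ratf) (a : gj_arg n) : option ratf :=
  match a with
  | GIn i => Some ('X_i, 1)
  | GVal j => if (j < size vs)%N then Some (nth (0, 1) vs j) else None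
  end.

Definition gj_sapply (o : gj_op) (u v : ratf) : ratf :=
  match o with
  | GAdd => (u.1 * v.2 + v.1 * u.2, u.2 * v.2)
  | GSub => (u.1 * v.2 - v.1 * u.2, u.2 * v.2)
  | GMul => (u.1 * v.1, u.2 * v.2)
  | GDiv => (u.1 * v.2, u.2 * v.1)
  end.

(* well-formedness on every computation path: references are valid and
   no division by an identically zero rational function *)
Fixpoint gj_wf (vs : seq ratf) (p : gj n O) : Prop :=
  match p with
  | GOut f => forall o, gj_sget vs (f o) <> None
  | GStep o a b p' =>
      match gj_sget vs a, gj_sget vs b with
      | Some u, Some v =>
          (o = GDiv -> v.1 <> 0) /\ gj_wf (rcons vs (gj_sapply o u v)) p'
      | _, _ => False
      end
  | GIf a p1 p2 => gj_sget vs a <> None /\ gj_wf vs p1 /\ gj_wf vs p2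
  end.

Fixpoint gj_values (vs : seq ratf) (p : gj n O) : seq ratf :=
  match p with
  | GOut _ => [::]
  | GStep o a b p' =>
      match gj_sget vs a, gj_sget vs b with
      | Some u, Some v =>
          let w := gj_sapply o u v in w :: gj_values (rcons vs w) p'
      | _, _ => [::]
      end
  | GIf _ p1 p2 => gj_values vs p1 ++ gj_values vs p2
  end.

Fixpoint gj_preds (vs : seq ratf) (p : gj n O) : seq ratf :=
  match p with
  | GOut _ => [::]
  | GStep o a b p' =>
      match gj_sget vs a, gj_sget vs b with
      | Some u, Some v => gj_preds (rcons vs (gj_sapply o u v)) p'
      | _, _ => [::]
      end
  | GIf a p1 p2 =>
      (if gj_sget vs a is Some u then [:: u] else [::])
        ++ gj_preds vs p1 ++ gj_preds vs p2
  end.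

Definition ratf_eq (u v : ratf) : Prop := u.1 * v.2 = v.1 * u.2.

(* total degree of a polynomial (0 for the zero polynomial) *)
Definition mdegree (P : {mpoly R[n]}) : nat := (msize P).-1.

(* the rational function P/Q has degree <= D: its reduced form (which is the
   representation minimising both degrees) has numerator and denominator of
   total degree <= D, i.e. some representation P'/Q' does *)
Definition ratf_deg_le (D : nat) (u : ratf) : Prop :=
  exists P Q : {mpoly R[n]},
    [/\ Q != 0, ratf_eq u (P, Q), (mdegree P <= D)%N & (mdegree Q <= D)%N].

Definition gj_degree_le (D : nat) (p : gj n O) : Prop :=
  forall u, u \in gj_values [::] p -> ratf_deg_le D u.

Definition gj_predcomp_le (c : nat) (p : gj n O) : Prop :=
  exists L : seq ratf, (size L <= c)%N /\
    forall u, u \in gj_preds [::] p -> exists2 v, v \in L & ratf_eq u v.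

End Semantics.

Definition gj_computes_pinv_proj (R : realType) (k d : nat)
    (Pr : 'M[R]_(k, d) -> Prop) (p : gj (k * d) ('I_d * 'I_d)) : Prop :=
  gj_wf (R := R) [::] p /\
  forall Z : 'M[R]_(k, d), Pr Z ->
    exists2 out, gj_run (fun i => mxvec Z 0 i) [::] p = Some out &
      exists2 X : 'M[R]_(d, k), is_pinv Z X &
        forall i j, out (i, j) = Some ((X *m Z) i j).

(* Main.v *)
From HB Require Import structures.
From mathcomp Require Import all_boot all_order all_algebra all_fingroup.
From mathcomp Require Import reals.
From mathcomp Require Import mpoly.
From mathcomp Require Import ring lra zify.
Require Import Defs.
Set Implicit Arguments.
Unset Strict Implicit.
Unset Printing Implicit Defensive.
Import Order.TTheory GRing.Theory Num.Theory.
Local Open Scope ring_scope.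

Inductive bop := BAdd | BSub | BMul.
Definition bop_gj (o : bop) : gj_op :=
  match o with BAdd => GAdd | BSub => GSub | BMul => GMul end.
Definition bapply (T : pzRingType) (o : bop) (u v : T) : T :=
  match o with BAdd => u + v | BSub => u - v | BMul => u * v end.

Inductive expr (n : nat) := EIn of 'I_n | EOne | EBin of bop & expr n & expr n.
Arguments EOne {n}.

Section Expr.
Variable n : nat.

Fixpoint eeval (T : pzRingType) (x : 'I_n -> T) (c : T) (e : expr n) : T :=
  match e with
  | EIn i => x i
  | EOne => c
  | EBin o a b => bapply o (eeval x c a) (eeval x c b)
  end.

Fixpoint fdeg (e : expr n) : nat :=
  match e with
  | EIn _ => 1%N
  | EOne => 0%N
  | EBin BMul a b => (fdeg a + fdeg b)%N
  | EBin _ a b => maxn (fdeg a) (fdeg b)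
  end.

Definition instr := (gj_op * gj_arg n * gj_arg n)%type.

Fixpoint prep (O : Type) (c : seq instr) (p : gj n O) : gj n O :=
  match c with
  | [::] => p
  | (o, a, b) :: c' => GStep o a b (prep c' p)
  end.

Lemma prep_cat O c1 c2 (p : gj n O) : prep (c1 ++ c2) p = prep c1 (prep c2 p).
Proof. by elim: c1 => [|[[o a] b] c1 IH] //=; rewrite IH. Qed.

Fixpoint comp (s m : nat) (e : expr n) : seq instr * gj_arg n :=
  match e with
  | EIn i => ([::], GIn i)
  | EOne => ([::], GVal s)
  | EBin o a b =>
      let ca := comp s m a in
      let cb := comp s (m + size ca.1) b in
      (ca.1 ++ cb.1 ++ [:: (bop_gj o, ca.2, cb.2)],
       GVal (m + size ca.1 + size cb.1))
  end.

Lemma size_comp s m e : size (comp s m e).1 = size (comp s 0 e).1.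
Proof.
elim: e m => //= o a IHa b IHb m.
by rewrite !size_cat IHa IHb [in RHS]IHb.
Qed.

Section Conc.
Variable R : realType.
Variable x : 'I_n -> R.

Lemma get_cat (vs ws : seq R) a v :
  gj_get x vs a = Some v -> gj_get x (vs ++ ws) a = Some v.
Proof.
case: a => //= j; case: ifP => // lt [<-].
by rewrite size_cat nth_cat lt (leq_trans lt) // leq_addr.
Qed.

Lemma comp_run s e : forall m (vs : seq R), size vs = m -> (s < m)%N ->
  exists ws : seq R,
    [/\ size ws = size (comp s m e).1,
        forall O (p : gj n O), gj_run x vs (prep (comp s m e).1 p) = gj_run x (vs ++ ws) p
      & gj_get x (vs ++ ws) (comp s m e).2 = Some (eeval x (nth 0 vs s) e)].
Proof.
elim: e => [i|| o a IHa b IHb] m vs Hm Hs /=.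
- by exists [::]; rewrite cats0.
- by exists [::]; rewrite cats0 /= Hm Hs.
have [wa [Ha1 Ha2 Ha3]] := IHa m vs Hm Hs.
have Hm' : size (vs ++ wa) = (m + size (comp s m a).1)%N by rewrite size_cat Hm Ha1.
have [wb [Hb1 Hb2 Hb3]] := IHb _ (vs ++ wa) Hm' (leq_trans Hs (leq_addr _ _)).
have Ens : nth 0 (vs ++ wa) s = nth 0 vs s by rewrite nth_cat Hm Hs.
rewrite Ens in Hb3.
set va := eeval x (nth 0 vs s) a in Ha3 *.
set vb := eeval x (nth 0 vs s) b in Hb3 *.
exists (wa ++ wb ++ [:: bapply o va vb]); split.
- by rewrite !size_cat Ha1 Hb1.
- move=> O p; rewrite !prep_cat Ha2 Hb2 /=.
  rewrite (get_cat wb Ha3) Hb3.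
  have -> : (if bop_gj o is GDiv then vb == 0 else false) = false by case: o.
  by rewrite -cats1 -!catA; congr gj_run; case: o.
- have E : (m + size (comp s m a).1 + size (comp s (m + size (comp s m a).1) b).1)%N
      = size (vs ++ wa ++ wb) by rewrite !size_cat Hm Ha1 Hb1 addnA.
  have E2 : size (vs ++ wa ++ wb ++ [:: bapply o va vb]) = (size (vs ++ wa ++ wb)).+1.
    by rewrite !size_cat /= !addnA addn1.
  rewrite /= E E2 ltnSn catA catA nth_cat catA size_cat ltnn subnn.
  by [].
Qed.

End Conc.
End Expr.

Section Sym.
Variable R : realType.
Variable n : nat.
Local Notation mp := {mpoly R[n]}.

Definition rep (u : ratf R n) (P : mp) := u.2 != 0 /\ u.1 = P * u.2.
Definition Xv : 'I_n -> mp := fun i => 'X_i.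

Definition bdeg (o : bop) (a b : nat) := if o is BMul then (a + b)%N else maxn a b.

Lemma fdegE o (a b : expr n) : fdeg (EBin o a b) = bdeg o (fdeg a) (fdeg b).
Proof. by case: o. Qed.

Lemma mdegD (P Q : mp) : (mdegree (P + Q) <= maxn (mdegree P) (mdegree Q))%N.
Proof.
rewrite /mdegree -!subn1; have := msizeD_le P Q; lia.
Qed.


Lemma mdegM (P Q : mp) : (mdegree (P * Q) <= mdegree P + mdegree Q)%N.
Proof.
have [->|nP] := eqVneq P 0; first by rewrite mul0r /mdegree msize0.
have [->|nQ] := eqVneq Q 0; first by rewrite mulr0 /mdegree msize0.
rewrite /mdegree msizeM //.
have hP : (0 < msize P)%N by rewrite lt0n msize_poly_eq0.
have hQ : (0 < msize Q)%N by rewrite lt0n msize_poly_eq0.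
rewrite -!subn1.
move: hP hQ; set a := mmeasure _ P; set b := mmeasure _ Q; lia.
Qed.

Lemma mdeg_bapply o (P Q : mp) :
  (mdegree (bapply o P Q) <= bdeg o (mdegree P) (mdegree Q))%N.
Proof.
case: o => /=; [exact: mdegD| |exact: mdegM].
by have := mdegD P (- Q); rewrite /mdegree msizeN.
Qed.

Lemma rep_sapply o u v P Q : rep u P -> rep v Q ->
  rep (gj_sapply (bop_gj o) u v) (bapply o P Q).
Proof.
case=> u2 u1 [v2 v1]; split; first by case: o; rewrite /= mulf_neq0.
by case: o; rewrite /= u1 v1; ring.
Qed.

Lemma rep_mdeg u P : rep u P -> ratf_deg_le (mdegree P) u.
Proof.
case=> u2 u1; exists P, 1; split => //; first exact: oner_neq0.
  by rewrite /ratf_eq /= mulr1 u1 mulrC.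
by rewrite /mdegree msize1.
Qed.

Lemma sget_cat (vs ws : seq (ratf R n)) a v :
  gj_sget vs a = Some v -> gj_sget (vs ++ ws) a = Some v.
Proof.
case: a => //= j; case: ifP => // lt [<-].
by rewrite size_cat nth_cat lt (leq_trans lt) // leq_addr.
Qed.

Lemma fdeg_sub o (a b : expr n) :
  (fdeg a <= fdeg (EBin o a b))%N /\ (fdeg b <= fdeg (EBin o a b))%N.
Proof. case: o => /=; split; lia. Qed.

Lemma mdeg_eeval (c : mp) (e : expr n) : mdegree c = 0%N ->
  (mdegree (eeval Xv c e) <= fdeg e)%N.
Proof.
move=> Hc0; elim: e => [i||o' a' IHa' b' IHb'] /=.
- by rewrite /mdegree /Xv msizeX mdeg1.
- by rewrite Hc0.
- apply: leq_trans (mdeg_bapply _ _ _) _.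
  by case: o' => /=; lia.
Qed.

Lemma comp_sym s (c : mp) (e : expr n) : forall m (vs : seq (ratf R n)),
  size vs = m -> (s < m)%N -> rep (nth (0, 1) vs s) c -> mdegree c = 0%N ->
  exists ws : seq (ratf R n),
    [/\ size ws = size (comp s m e).1,
        forall O (p : gj n O),
          [/\ gj_wf vs (prep (comp s m e).1 p) <-> gj_wf (vs ++ ws) p,
              gj_values vs (prep (comp s m e).1 p) = ws ++ gj_values (vs ++ ws) p
            & gj_preds vs (prep (comp s m e).1 p) = gj_preds (vs ++ ws) p],
        forall u, u \in ws -> exists2 P, rep u P & (mdegree P <= fdeg e)%N
      & exists2 u, gj_sget (vs ++ ws) (comp s m e).2 = Some u & rep u (eeval Xv c e)].
Proof.
move=> m vs Hm Hs Hc Hc0; elim: e m vs Hm Hs Hc => [i|| o a IHa b IHb] m vs Hm Hs Hc /=.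
- exists [::]; rewrite cats0; split => //.
  exists ('X_i, 1) => //; split; [exact: oner_neq0 | by rewrite mulr1].
- exists [::]; rewrite cats0; split => //.
  by exists (nth (0, 1) vs s) => //=; rewrite Hm Hs.
have [wa [Ha1 Ha2 Ha3 [ua Hua Hra]]] := IHa m vs Hm Hs Hc.
have Hm' : size (vs ++ wa) = (m + size (comp s m a).1)%N by rewrite size_cat Hm Ha1.
have Ens : nth (0, 1) (vs ++ wa) s = nth (0, 1) vs s by rewrite nth_cat Hm Hs.
have Hc' : rep (nth (0, 1) (vs ++ wa) s) c by rewrite Ens.
have [wb [Hb1 Hb2 Hb3 [ub Hub Hrb]]] :=
  IHb _ (vs ++ wa) Hm' (leq_trans Hs (leq_addr _ _)) Hc'.
set w := gj_sapply (bop_gj o) ua ub.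
have Hw : rep w (eeval Xv c (EBin o a b)) by exact: rep_sapply.
have [Sa Sb] := fdeg_sub o a b.
have E : (m + size (comp s m a).1 + size (comp s (m + size (comp s m a).1) b).1)%N
      = size (vs ++ wa ++ wb) by rewrite !size_cat Hm Ha1 Hb1 addnA.
have E2 : size (vs ++ wa ++ wb ++ [:: w]) = (size (vs ++ wa ++ wb)).+1.
  by rewrite !size_cat /= !addnA addn1.
exists (wa ++ wb ++ [:: w]); split.
- by rewrite !size_cat Ha1 Hb1.
- move=> O p; rewrite !prep_cat.
  have [A1 A2 A3] := Ha2 O (prep (comp s (m + size (comp s m a).1) b).1
     (prep [:: (bop_gj o, (comp s m a).2, (comp s (m + size (comp s m a).1) b).2)] p)).
  have [B1 B2 B3] := Hb2 O (prep [:: (bop_gj o, (comp s m a).2, (comp s (m + size (comp s m a).1) b).2)] p).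
  split.
  + rewrite A1 B1 /= (sget_cat wb Hua) Hub -/w -cats1 -!catA.
    split; [by case=> _ | move=> h; split => // hd; exfalso; move: hd; by case: (o)].
  + by rewrite A2 B2 /= (sget_cat wb Hua) Hub -/w -cats1 -!catA.
  + by rewrite A3 B3 /= (sget_cat wb Hua) Hub -/w -cats1 -!catA.
- move=> u; rewrite !mem_cat => /or3P [/Ha3|/Hb3|].
  + by case=> P HP HPd; exists P => //; apply: leq_trans Sa.
  + by case=> P HP HPd; exists P => //; apply: leq_trans Sb.
  + rewrite mem_seq1 => /eqP ->; exists (eeval Xv c (EBin o a b)) => //.
    exact: mdeg_eeval.
- exists w => //; rewrite /= E E2 ltnSn.
  have -> : vs ++ wa ++ wb ++ [:: w] = (vs ++ wa ++ wb) ++ [:: w] by rewrite -!catA.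
  by rewrite nth_cat ltnn subnn.
Qed.

End Sym.

Section Build.
Variable n : nat.
Variable i0 : 'I_n.

Definition EZero : expr n := EBin BSub (EIn i0) (EIn i0).
Definition esum (l : seq (expr n)) : expr n := foldr (EBin BAdd) EZero l.
Fixpoint eprod1 (e : expr n) (l : seq (expr n)) : expr n :=
  if l is f :: l' then EBin BMul e (eprod1 f l') else e.
Definition eprod (l : seq (expr n)) : expr n :=
  if l is e :: l' then eprod1 e l' else EOne.
Definition sgn (b : bool) (e : expr n) : expr n :=
  if b then EBin BSub EZero e else e.
Definition dexp r (M : 'M[expr n]_r) : expr n :=
  esum [seq sgn (odd_perm s) (eprod [seq M i (s i) | i <- enum 'I_r]) | s <- enum 'S_r].
Definition cofexp r (M : 'M[expr n]_r) (i j : 'I_r) : expr n :=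
  sgn (odd (i + j)) (dexp (row' i (col' j M))).
Definition adjexp r (M : 'M[expr n]_r) : 'M[expr n]_r :=
  \matrix_(i, j) cofexp M j i.

Section Eval.
Variable T : comPzRingType.
Variable x : 'I_n -> T.
Variable c : T.
Local Notation ev := (eeval x c).

Lemma ev_zero : ev EZero = 0.
Proof. by rewrite /= subrr. Qed.

Lemma ev_esum l : ev (esum l) = \sum_(e <- l) ev e.
Proof. elim: l => [|e l IH]; first by rewrite big_nil /= subrr. by rewrite big_cons -IH. Qed.

Lemma ev_eprod1 e l : ev (eprod1 e l) = \prod_(f <- e :: l) ev f.
Proof.
elim: l e => [|f l IH] e /=; first by rewrite big_seq1.
by rewrite IH [in RHS]big_cons.
Qed.

Lemma ev_eprod l : (0 < size l)%N || (c == 1) -> ev (eprod l) = \prod_(f <- l) ev f.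
Proof.
case: l => [|e l] /=; last by rewrite ev_eprod1.
by move/eqP ->; rewrite big_nil.
Qed.

Lemma ev_sgn b e : ev (sgn b e) = (-1) ^+ b * ev e.
Proof. case: b => /=; last by rewrite expr0 mul1r. by rewrite expr1 subrr sub0r mulN1r. Qed.

Lemma sum_map (J : Type) (f : J -> expr n) l :
  \sum_(e <- map f l) ev e = \sum_(j <- l) ev (f j).
Proof. by elim: l => [|a l IH] /=; rewrite ?big_nil // !big_cons IH. Qed.

Lemma prod_map (J : Type) (f : J -> expr n) l :
  \prod_(e <- map f l) ev e = \prod_(j <- l) ev (f j).
Proof. by elim: l => [|a l IH] /=; rewrite ?big_nil // !big_cons IH. Qed.

Lemma sum_enum (I : finType) (F : I -> T) : \sum_(i <- enum I) F i = \sum_i F i.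
Proof. by rewrite big_enum. Qed.

Lemma prod_enum (I : finType) (F : I -> T) : \prod_(i <- enum I) F i = \prod_i F i.
Proof. by rewrite big_enum. Qed.

Lemma ev_dexp r (M : 'M[expr n]_r) : (0 < r)%N || (c == 1) ->
  ev (dexp M) = \det (map_mx ev M).
Proof.
move=> H; rewrite /dexp ev_esum sum_map sum_enum /determinant.
apply: eq_bigr => s _; rewrite ev_sgn ev_eprod ?size_map ?size_enum_ord //.
  by rewrite prod_map prod_enum; congr (_ * _); apply: eq_bigr => i _; rewrite mxE.
by rewrite -enumT size_enum_ord.
Qed.

Lemma ev_adjexp r (M : 'M[expr n]_r) : c = 1 ->
  map_mx ev (adjexp M) = \adj (map_mx ev M).
Proof.
move=> c1; apply/matrixP => i j; rewrite !mxE /cofexp /cofactor ev_sgn signr_odd.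
rewrite ev_dexp; last by rewrite c1 eqxx orbT.
by congr (_ * \det _); apply/matrixP => a b; rewrite !mxE.
Qed.

End Eval.

Lemma fdeg_zero : fdeg EZero = 1%N.
Proof. by []. Qed.

Lemma fdeg_esum l b : all (fun e => fdeg e <= b)%N l -> (1 <= b)%N ->
  (fdeg (esum l) <= b)%N.
Proof.
elim: l => [|e l IH] /= H1 Hb //.
by case/andP: H1 => h1 h2; rewrite geq_max h1 IH.
Qed.

Lemma fdeg_eprod1 e l b : all (fun f => fdeg f <= b)%N (e :: l) ->
  (fdeg (eprod1 e l) <= b * (size l).+1)%N.
Proof.
elim: l e => [|f l IH] e /= H; first by rewrite muln1; case/andP: H.
case/andP: H => h1 h2.
by rewrite mulnS leq_add // IH.
Qed.

Lemma fdeg_eprod l b : all (fun f => fdeg f <= b)%N l ->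
  (fdeg (eprod l) <= b * size l)%N.
Proof. by case: l => [|e l] H //=; apply: fdeg_eprod1. Qed.

Lemma fdeg_sgn bb e : (fdeg (sgn bb e) <= maxn 1 (fdeg e))%N.
Proof. by case: bb => /=; rewrite ?leq_maxr // geq_max leq_maxl leq_maxr. Qed.

Lemma fdeg_dexp r (M : 'M[expr n]_r) b : (forall i j, (fdeg (M i j) <= b)%N) ->
  (fdeg (dexp M) <= maxn 1 (b * r))%N.
Proof.
move=> H; apply: fdeg_esum; last by rewrite leq_maxl.
rewrite all_map; apply/allP => s _ /=.
apply: leq_trans (fdeg_sgn _ _) _.
rewrite geq_max leq_maxl /=; apply: leq_trans (leq_maxr 1 _).
rewrite -[X in (_ <= b * X)%N](size_enum_ord r) -(size_map (fun i => M i (s i))).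
by apply: fdeg_eprod; rewrite all_map; apply/allP => i _ /=.
Qed.

End Build.

Section LA.
Variable R : realType.

Lemma rv_norm0 d (u : 'rV[R]_d) : u *m u^T = 0 -> u = 0.
Proof.
move/matrixP/(_ 0 0); rewrite !mxE => H.
have H' : \sum_j u 0 j * u 0 j = 0.
  by rewrite -[RHS]H; apply: eq_bigr => j _; rewrite mxE.
apply/matrixP => i j; rewrite (ord1 i) mxE.
have nn : forall j : 'I_d, true -> 0 <= u 0 j * u 0 j.
  by move=> k _; rewrite -expr2 sqr_ge0.
have := psumr_eq0P nn H'. move=> /(_ j isT).
by move=> /eqP; rewrite mulf_eq0 orbb => /eqP.
Qed.

Lemma gram_unit m d (B : 'M[R]_(m, d)) : row_free B -> B *m B^T \in unitmx.
Proof.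
move=> fB; rewrite -row_free_unit; apply: inj_row_free => v Hv.
have : (v *m B) *m (v *m B)^T = 0.
  by rewrite trmx_mul !mulmxA -(mulmxA v) Hv mul0mx.
move/rv_norm0 => vB0; apply: (row_free_inj fB); by rewrite vB0 mul0mx.
Qed.

Lemma unit_row_free m d (B : 'M[R]_(m, d)) : B *m B^T \in unitmx -> row_free B.
Proof.
move=> U; rewrite /row_free eqn_leq rank_leq_row /=.
by rewrite -{1}(mxrank_unit U) mxrankM_maxl.
Qed.

Lemma pinv_exists k d r (Z : 'M[R]_(k, d)) (B : 'M[R]_(r, d)) :
  row_free B -> (Z <= B)%MS -> (B <= Z)%MS ->
  exists2 X : 'M[R]_(d, k), is_pinv Z X & X *m Z = B^T *m invmx (B *m B^T) *m B.
Proof.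
move=> fB /submxP [A EZ] sBZ.
have fAt : row_free A^T.
  rewrite /row_free eqn_leq rank_leq_row mxrank_tr /=.
  have h1 := mxrankS sBZ; rewrite EZ in h1.
  have h2 := mxrankM_maxl A B.
  have h3 : \rank B = r by apply/eqP.
  lia.
set G := B *m B^T; set H := A^T *m A.
have UG : G \in unitmx by exact: gram_unit.
have UH : H \in unitmx by have := gram_unit fAt; rewrite trmxK.
have GT : G^T = G by rewrite /G trmx_mul trmxK.
have HT : H^T = H by rewrite /H trmx_mul trmxK.
set X := B^T *m invmx G *m invmx H *m A^T.
have XZ : X *m Z = B^T *m invmx G *m B.
  rewrite /X EZ !mulmxA -(mulmxA _ A^T A) -/H -(mulmxA _ (invmx H)) mulVmx //.
  by rewrite mulmx1.
have ZX : Z *m X = A *m invmx H *m A^T.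
  rewrite /X EZ !mulmxA -(mulmxA A B) -/G -(mulmxA A G) mulmxV //.
  by rewrite mulmx1.
exists X => //; split.
- rewrite ZX EZ !mulmxA -(mulmxA _ A^T A) -/H -(mulmxA _ (invmx H)) mulVmx //.
  by rewrite mulmx1.
- rewrite XZ /X !mulmxA -(mulmxA _ B B^T) -/G -(mulmxA _ (invmx G) G) mulVmx //.
  by rewrite mulmx1.
- by rewrite ZX !trmx_mul trmxK trmx_inv HT mulmxA.
- by rewrite XZ !trmx_mul trmxK trmx_inv GT mulmxA.
Qed.

Lemma pinv_entry d r (B : 'M[R]_(r, d)) i j : B *m B^T \in unitmx ->
  (B^T *m invmx (B *m B^T) *m B) i j =
  (B^T *m \adj (B *m B^T) *m B) i j / \det (B *m B^T).
Proof.
move=> U; rewrite /invmx U -scalemxAr -scalemxAl mxE mulrC.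
by [].
Qed.

End LA.

Section Prob.
Variables k d : nat.
Local Notation n := (k * d)%N.
Variable i0 : 'I_n.

Definition Bm (T : Type) (Z : 'M[T]_(k, d)) (A : {set 'I_k}) : 'M[T]_(#|A|, d) :=
  \matrix_(j, t) Z (enum_val j) t.
Definition Zx (T : Type) (x : 'I_n -> T) : 'M[T]_(k, d) :=
  \matrix_(a, t) x (mxvec_index a t).

Definition zexp (a : 'I_k) (t : 'I_d) : expr n := EIn (mxvec_index a t).
Definition Gexp (A : {set 'I_k}) : 'M[expr n]_#|A| :=
  \matrix_(a, b) esum i0 [seq EBin BMul (zexp (enum_val a) t) (zexp (enum_val b) t)
                         | t <- enum 'I_d].
Definition texp (A : {set 'I_k}) : expr n :=
  EBin BSub (EZero i0) (EBin BMul (dexp i0 (Gexp A)) (dexp i0 (Gexp A))).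
Definition Nexp (A : {set 'I_k}) (o : 'I_d * 'I_d) : expr n :=
  esum i0 [seq esum i0 [seq EBin BMul (EBin BMul (zexp (enum_val a) o.1)
                                           (adjexp i0 (Gexp A) a b))
                                    (zexp (enum_val b) o.2)
                       | b <- enum 'I_#|A|] | a <- enum 'I_#|A|].

Section EvT.
Variable T : comPzRingType.
Variable x : 'I_n -> T.

Lemma ev_Gexp c A : map_mx (eeval x c) (Gexp A) = Bm (Zx x) A *m (Bm (Zx x) A)^T.
Proof.
apply/matrixP => a b; rewrite !mxE ev_esum sum_map sum_enum.
by apply: eq_bigr => t _; rewrite !mxE.
Qed.

Lemma ev_adj_entry r (M : 'M[expr n]_r) a b :
  eeval x 1 (adjexp i0 M a b) = \adj (map_mx (eeval x 1) M) a b.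
Proof. by rewrite -(ev_adjexp i0 x M (erefl 1)) [RHS]mxE. Qed.

Lemma ev_Nexp A o : eeval x 1 (Nexp A o) =
  ((Bm (Zx x) A)^T *m \adj (Bm (Zx x) A *m (Bm (Zx x) A)^T) *m Bm (Zx x) A) o.1 o.2.
Proof.
rewrite ev_esum sum_map sum_enum mxE.
under eq_bigr do rewrite ev_esum sum_map sum_enum.
rewrite exchange_big; apply: eq_bigr => b _; rewrite mxE mulr_suml.
apply: eq_bigr => a _ /=.
rewrite ev_adj_entry ev_Gexp !mxE.
by [].
Qed.

Lemma ev_texp c (A : {set 'I_k}) : (0 < #|A|)%N ->
  eeval x c (texp A) = 0 - \det (Bm (Zx x) A *m (Bm (Zx x) A)^T) *
                           \det (Bm (Zx x) A *m (Bm (Zx x) A)^T).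
Proof.
move=> H; rewrite /texp [LHS]/= subrr.
by rewrite (ev_dexp i0 x (Gexp A)) ?H // ev_Gexp.
Qed.

End EvT.

Section Rank.
Variable R : realType.
Variable Z : 'M[R]_(k, d).

Lemma Bm_row (A : {set 'I_k}) j : row j (Bm Z A) = row (enum_val j) Z.
Proof. by apply/rowP => t; rewrite !mxE. Qed.

Lemma row_in_Bm (A : {set 'I_k}) z : z \in A -> (row z Z <= Bm Z A)%MS.
Proof.
move=> zA; rewrite -(enum_rankK_in zA zA) -Bm_row; exact: row_sub.
Qed.

Lemma Bm_sub m (C : 'M[R]_(m, d)) (A : {set 'I_k}) :
  (forall z, z \in A -> (row z Z <= C)%MS) -> (Bm Z A <= C)%MS.
Proof. by move=> H; apply/row_subP => j; rewrite Bm_row H // enum_valP. Qed.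

Lemma Bm_subZ (A : {set 'I_k}) : (Bm Z A <= Z)%MS.
Proof. by apply: Bm_sub => z _; exact: row_sub. Qed.

Lemma Bm_mono (S T : {set 'I_k}) : S \subset T -> (Bm Z S <= Bm Z T)%MS.
Proof. by move=> /subsetP sST; apply: Bm_sub => z /sST; exact: row_in_Bm. Qed.

Lemma step_skip (S : {set 'I_k}) i : row_free (Bm Z S) -> ~~ row_free (Bm Z (i |: S)) ->
  (row i Z <= Bm Z S)%MS.
Proof.
move=> fS nfT; apply/negPn/negP => ni.
have iS : i \notin S by apply: contra ni => iS; exact: row_in_Bm.
have lt : (Bm Z S < Bm Z S + row i Z)%MS.
  rewrite ltmxE addsmxSl /=; apply: contra ni => h.
  exact: submx_trans (addsmxSr _ _) h.
have le : (Bm Z S + row i Z <= Bm Z (i |: S))%MS.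
  rewrite addsmx_sub Bm_mono ?subsetUr // row_in_Bm //.
  by rewrite in_setU1 eqxx.
move: lt; rewrite ltmxErank => /andP [_ lt].
have r1 := mxrankS le.
have r2 := rank_leq_row (Bm Z (i |: S)).
have r3 : \rank (Bm Z S) = #|S| by apply/eqP.
have c : #|i |: S| = #|S|.+1 by rewrite cardsU1 iS.
move/negP: nfT; apply; rewrite /row_free.
apply/eqP; lia.
Qed.

Lemma full_sub (S : {set 'I_k}) j : row_free (Bm Z S) -> #|S| = d -> (row j Z <= Bm Z S)%MS.
Proof.
move=> fS HS; apply: submx_full; rewrite /row_full.
by move/eqP: fS => ->; rewrite HS.
Qed.

Lemma gram_det_neq0 (A : {set 'I_k}) : (\det (Bm Z A *m (Bm Z A)^T) != 0) = row_free (Bm Z A).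
Proof.
apply/idP/idP => [h | h].
  by apply: unit_row_free; rewrite unitmxE unitfE.
by rewrite -unitfE -unitmxE; exact: gram_unit.
Qed.

End Rank.

Lemma Zx_mxvec (R : realType) (Z : 'M[R]_(k, d)) : Zx (fun i => mxvec Z 0 i) = Z.
Proof. by apply/matrixP => a t; rewrite mxE mxvecE. Qed.

End Prob.

Section Progs.
Variables k d : nat.
Local Notation n := (k * d)%N.
Variable i0 : 'I_n.
Local Notation O := ('I_d * 'I_d)%type.

Definition upd (f : O -> gj_arg n) (o : O) (v : gj_arg n) : O -> gj_arg n :=
  fun o' => if o' == o then v else f o'.

Fixpoint outs (A : {set 'I_k}) (aD : gj_arg n) (s : nat) (l : seq O) (m : nat)
    (f : O -> gj_arg n) : gj n O :=
  match l with
  | [::] => GOut f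
  | o :: l' =>
      let cc := comp s m (Nexp i0 A o) in
      prep cc.1 (GStep GDiv cc.2 aD
        (outs A aD s l' (m + size cc.1).+1 (upd f o (GVal (m + size cc.1)))))
  end.

Definition final (A : {set 'I_k}) (m : nat) : gj n O :=
  if #|A| == 0%N then GOut (fun _ => GVal 0) else
  let cD := comp 0 m (dexp i0 (Gexp i0 A)) in
  let m1 := (m + size cD.1)%N in
  prep cD.1 (GStep GDiv cD.2 cD.2 (outs A cD.2 m1 (enum (@predT O)) m1.+1 (fun _ => GVal 0))).

Fixpoint greedy (l : seq 'I_k) (S : {set 'I_k}) (m : nat) : gj n O :=
  match l with
  | [::] => final S m
  | i :: l' =>
      if (#|S| < d)%N then
        let cc := comp 0 m (texp i0 (i |: S)) in
        prep cc.1 (GIf cc.2 (greedy l' S (m + size cc.1)) (greedy l' (i |: S) (m + size cc.1)))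
      else final S m
  end.

Definition prog1 : gj n O := GStep GSub (GIn i0) (GIn i0) (greedy (enum 'I_k) set0 1).
Definition prog2 : gj n O :=
  if (k <= d)%N then GStep GSub (GIn i0) (GIn i0) (final setT 1) else GOut (fun _ => GIn i0).

Section Conc.
Variable R : realType.
Variable Z : 'M[R]_(k, d).
Local Notation x := (fun i => mxvec Z 0 i).

Definition Good (out : O -> option R) :=
  exists2 X : 'M[R]_(d, k), is_pinv Z X & forall i j, out (i, j) = Some ((X *m Z) i j).

Lemma outs_run A aD s D (g : O -> R) : forall l m (vs : seq R) f,
  size vs = m -> (s < m)%N -> nth 0 vs s = 1 -> gj_get x vs aD = Some D -> D != 0 ->
  (forall o, o \notin l -> gj_get x vs (f o) = Some (g o)) ->
  (forall o, o \in l -> g o = eeval x 1 (Nexp i0 A o) / D) ->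
  exists2 out, gj_run x vs (outs A aD s l m f) = Some out & forall o, out o = Some (g o).
Proof.
elim=> [|o l IH] m vs f Hm Hs H1 HD D0 Hf Hg /=.
  by exists (fun o => gj_get x vs (f o)) => // o; rewrite Hf.
have [ws [W1 W2 W3]] := comp_run x (Nexp i0 A o) Hm Hs.
rewrite W2 /= W3 (get_cat ws HD) (negbTE D0) H1.
set q := eeval x 1 (Nexp i0 A o) / D.
have Hm' : size (rcons (vs ++ ws) q) = (m + size (comp s m (Nexp i0 A o)).1).+1.
  by rewrite size_rcons size_cat Hm W1.
have Hnth : nth 0 (rcons (vs ++ ws) q) s = 1.
  by rewrite nth_rcons size_cat Hm (leq_trans Hs (leq_addr _ _)) nth_cat Hm Hs.
have HD' : gj_get x (rcons (vs ++ ws) q) aD = Some D.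
  by rewrite -cats1; apply: get_cat; apply: get_cat.
apply: (IH _ _ _ Hm' _ Hnth HD' D0).
- by apply: leq_trans Hs _; rewrite -addnS leq_addr.
- move=> o'; rewrite /upd; case: eqP => [-> _ | ne].
    rewrite /= size_rcons size_cat Hm W1 ltnSn nth_rcons size_cat Hm W1 ltnn eqxx.
    by rewrite Hg ?mem_head.
  move=> no'; rewrite -cats1; apply: get_cat; apply: get_cat; apply: Hf.
  by rewrite inE negb_or no' andbT; apply/eqP.
- by move=> o' Ho'; apply: Hg; rewrite inE Ho' orbT.
Qed.

Lemma final_run (A : {set 'I_k}) m (vs : seq R) :
  size vs = m -> (0 < m)%N -> nth 0 vs 0 = 0 ->
  row_free (Bm Z A) -> (Z <= Bm Z A)%MS ->
  exists2 out, gj_run x vs (final A m) = Some out & Good out.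
Proof.
move=> Hm Hm0 H0 fA sZ.
have [X HX XZ] := pinv_exists fA sZ (Bm_subZ Z A).
rewrite /final; case: eqP => [A0 | A0].
  exists (fun _ => gj_get x vs (GVal 0)) => //; exists X => // i j.
  have B0 : Bm Z A = 0.
    by apply/matrixP => a; case: a => a ha; exfalso; move: ha; rewrite A0.
  by rewrite /= Hm Hm0 H0 XZ B0 mulmx0 mxE.
have r0 : (0 < #|A|)%N by rewrite lt0n; apply/eqP.
set B := Bm Z A.
have [ws [W1 W2 W3]] := comp_run x (dexp i0 (Gexp i0 A)) Hm Hm0.
rewrite (ev_dexp i0 x (Gexp i0 A)) ?r0 // ev_Gexp Zx_mxvec -/B in W3.
have D0 : \det (B *m B^T) != 0 by rewrite gram_det_neq0.
have UG : B *m B^T \in unitmx by exact: gram_unit.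
rewrite W2 /= W3 (negbTE D0) /=.
set m1 := (m + size (comp 0 m (dexp i0 (Gexp i0 A))).1)%N.
have Hm' : size (rcons (vs ++ ws) (\det (B *m B^T) / \det (B *m B^T))) = m1.+1.
  by rewrite size_rcons size_cat Hm W1.
have Hnth : nth 0 (rcons (vs ++ ws) (\det (B *m B^T) / \det (B *m B^T))) m1 = 1.
  by rewrite nth_rcons size_cat Hm W1 ltnn eqxx divff.
have HD' : gj_get x (rcons (vs ++ ws) (\det (B *m B^T) / \det (B *m B^T)))
   (comp 0 m (dexp i0 (Gexp i0 A))).2 = Some (\det (B *m B^T)).
  by rewrite -cats1; apply: get_cat.
set g := fun o : O => (B^T *m invmx (B *m B^T) *m B) o.1 o.2.
have Hg : forall o, o \in enum (@predT O) ->
    g o = eeval x 1 (Nexp i0 A o) / \det (B *m B^T).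
  by move=> o _; rewrite /g ev_Nexp Zx_mxvec -/B pinv_entry.
have Hf : forall o, o \notin enum (@predT O) ->
    gj_get x (rcons (vs ++ ws) (\det (B *m B^T) / \det (B *m B^T))) (GVal 0) = Some (g o).
  by move=> o; rewrite mem_enum.
have [out Hr Ho] := outs_run Hm' (ltnSn _) Hnth HD' D0 Hf Hg.
exists out => //; exists X => // i j; by rewrite Ho XZ.
Qed.

Lemma run_if (a : gj_arg n) (p1 p2 : gj n O) (vs : seq R) v :
  gj_get x vs a = Some v ->
  gj_run x vs (GIf a p1 p2) = if 0 <= v then gj_run x vs p1 else gj_run x vs p2.
Proof. by move=> /= ->. Qed.

Lemma test_ge0 (a : R) : (0 <= 0 - a * a) = (a == 0).
Proof.
rewrite sub0r oppr_ge0 -expr2; apply/idP/idP => [h|/eqP ->].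
  by rewrite -sqrf_eq0 eq_le h sqr_ge0.
by rewrite expr0n.
Qed.

Lemma greedy_run (l : seq 'I_k) : forall (S : {set 'I_k}) m (vs : seq R),
  size vs = m -> (0 < m)%N -> nth 0 vs 0 = 0 ->
  row_free (Bm Z S) -> (#|S| <= d)%N ->
  (forall j, j \notin l -> (row j Z <= Bm Z S)%MS) ->
  exists2 out, gj_run x vs (greedy l S m) = Some out & Good out.
Proof.
elim: l => [|i l IH] S m vs Hm Hm0 H0 fS HSd Hj /=.
  by apply: final_run => //; apply/row_subP => j; apply: Hj.
case: ltnP => HS; last first.
  apply: final_run => //; apply/row_subP => j; apply: full_sub => //.
  by apply/eqP; rewrite eqn_leq HSd HS.
set T := i |: S.
have [ws [W1 W2 W3]] := comp_run x (texp i0 T) Hm Hm0.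
have rT : (0 < #|T|)%N by rewrite (cardsD1 i) in_setU1 eqxx.
rewrite ev_texp // Zx_mxvec in W3.
rewrite W2 (run_if _ _ W3).
have Hm' : size (vs ++ ws) = (m + size (comp 0 m (texp i0 T)).1)%N by rewrite size_cat Hm W1.
have Hm0' : (0 < m + size (comp 0 m (texp i0 T)).1)%N by apply: leq_trans Hm0 (leq_addr _ _).
have H0' : nth 0 (vs ++ ws) 0 = 0 by rewrite nth_cat Hm Hm0.
rewrite test_ge0.
case: eqP => [z | nz].
  have nf : ~~ row_free (Bm Z T) by rewrite -gram_det_neq0 z eqxx.
  apply: IH => // j; case: (eqVneq j i) => [-> _ | ne nj].
    by apply: step_skip.
  by apply: Hj; rewrite inE negb_or nj andbT.
have fT : row_free (Bm Z T) by rewrite -gram_det_neq0; apply/eqP.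
apply: IH => //.
  by rewrite cardsU1; case: (i \notin S) => /=; lia.
move=> j; case: (eqVneq j i) => [-> _ | ne nj].
  by apply: row_in_Bm; rewrite in_setU1 eqxx.
apply: submx_trans (Hj _ _) (Bm_mono _ (subsetUr _ _)).
by rewrite inE negb_or nj andbT.
Qed.

End Conc.
End Progs.

Lemma eeval_morph n (T T' : comPzRingType) (f : {rmorphism T -> T'}) (x : 'I_n -> T) c e :
  f (eeval x c e) = eeval (f \o x) (f c) e.
Proof.
elim: e => [i||o a IHa b IHb] //=.
rewrite -IHa -IHb; case: o => /=; [exact: raddfD | exact: raddfB | exact: rmorphM].
Qed.

Lemma eeval_ext n (T : pzRingType) (x y : 'I_n -> T) c e : x =1 y ->
  eeval x c e = eeval y c e.
Proof. by move=> H; elim: e => [i||o a IHa b IHb] //=; rewrite IHa IHb. Qed.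

Section Deg.
Variables k d : nat.
Local Notation n := (k * d)%N.
Variable i0 : 'I_n.
Hypothesis k1 : (1 <= k)%N.

Lemma cardk (A : {set 'I_k}) : (#|A| <= k)%N.
Proof. by have := max_card (mem A); rewrite card_ord. Qed.

Lemma fdeg_G (A : {set 'I_k}) a b : (fdeg (Gexp i0 A a b) <= 2)%N.
Proof.
rewrite mxE; apply: fdeg_esum => //; rewrite all_map; exact/allP.
Qed.

Lemma fdeg_D (A : {set 'I_k}) : (fdeg (dexp i0 (Gexp i0 A)) <= 2 * k)%N.
Proof.
have := fdeg_dexp i0 (fdeg_G (A:=A)); have := cardk A; lia.
Qed.

Lemma fdeg_T (A : {set 'I_k}) : (fdeg (texp i0 A) <= 4 * k)%N.
Proof. have := fdeg_D A; rewrite /texp /=; lia. Qed.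

Lemma fdeg_adj (A : {set 'I_k}) a b : (fdeg (adjexp i0 (Gexp i0 A) a b) <= 2 * k)%N.
Proof.
rewrite mxE /cofexp; apply: leq_trans (fdeg_sgn _ _ _) _.
have : (fdeg (dexp i0 (row' b (col' a (Gexp i0 A)))) <= maxn 1 (2 * #|A|.-1))%N.
  apply: fdeg_dexp => i j; have := fdeg_G (A:=A) (lift b i) (lift a j).
  by rewrite !mxE.
have := cardk A; lia.
Qed.

Lemma fdeg_N (A : {set 'I_k}) o : (fdeg (Nexp i0 A o) <= 4 * k)%N.
Proof.
apply: fdeg_esum; last lia.
rewrite all_map; apply/allP => a _ /=; apply: fdeg_esum; last lia.
rewrite all_map; apply/allP => b _ /=.
move: (fdeg_adj (A:=A) a b) => h.
apply: leq_trans (leq_add (leq_add (leqnn 1) h) (leqnn 1)) _; lia.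
Qed.

End Deg.

Section SymProg.
Variable R : realType.
Variables k d : nat.
Local Notation n := (k * d)%N.
Variable i0 : 'I_n.
Hypothesis k1 : (1 <= k)%N.
Local Notation O := ('I_d * 'I_d)%type.
Local Notation rf := (ratf R n).

Lemma wf_step (O' : Type) o a b (p : gj n O') (vs : seq rf) u v :
  gj_sget vs a = Some u -> gj_sget vs b = Some v ->
  [/\ gj_wf vs (GStep o a b p) <-> ((o = GDiv -> v.1 <> 0) /\ gj_wf (rcons vs (gj_sapply o u v)) p),
      gj_values vs (GStep o a b p) = gj_sapply o u v :: gj_values (rcons vs (gj_sapply o u v)) p
    & gj_preds vs (GStep o a b p) = gj_preds (rcons vs (gj_sapply o u v)) p].
Proof. by move=> /= -> ->. Qed.

Lemma preds_if (O' : Type) a (p1 p2 : gj n O') (vs : seq rf) u :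
  gj_sget vs a = Some u ->
  gj_preds vs (GIf a p1 p2) = u :: gj_preds vs p1 ++ gj_preds vs p2.
Proof. by move=> /= ->. Qed.

Lemma mdeg0 : mdegree (0 : {mpoly R[n]}) = 0%N.
Proof. by rewrite /mdegree msize0. Qed.

Lemma mdeg1 : mdegree (1 : {mpoly R[n]}) = 0%N.
Proof. by rewrite /mdegree msize1. Qed.

Lemma rep_deg D (u : rf) P : rep u P -> (mdegree P <= D)%N -> ratf_deg_le D u.
Proof.
case=> u2 u1 h; exists P, 1; split => //; first exact: oner_neq0.
  by rewrite /ratf_eq /= mulr1 u1 mulrC.
by rewrite mdeg1.
Qed.

Lemma div_deg D (uN uD : rf) (PN PD : {mpoly R[n]}) : rep uN PN -> rep uD PD -> PD != 0 ->
  (mdegree PN <= D)%N -> (mdegree PD <= D)%N ->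
  ratf_deg_le D (gj_sapply GDiv uN uD).
Proof.
case=> n2 n1 [d2 d1] nz h1 h2; exists PN, PD; split => //.
by rewrite /ratf_eq /= n1 d1; ring.
Qed.

Lemma rep_one (uD : rf) (PD : {mpoly R[n]}) : rep uD PD -> PD != 0 -> rep (gj_sapply GDiv uD uD) 1.
Proof.
case=> d2 d1 nz; split => /=; first by rewrite d1 !mulf_neq0.
by rewrite mul1r mulrC.
Qed.

Lemma outs_sym (A : {set 'I_k}) aD s uD PD : forall l m (vs : seq rf) f,
  size vs = m -> (s < m)%N -> rep (nth (0, 1) vs s) 1 ->
  gj_sget vs aD = Some uD -> rep uD PD -> PD != 0 -> (mdegree PD <= 4 * k)%N ->
  (forall o, o \notin l -> gj_sget vs (f o) <> None) ->
  [/\ gj_wf vs (outs i0 A aD s l m f),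
      forall u, u \in gj_values vs (outs i0 A aD s l m f) -> ratf_deg_le (4 * k) u
    & gj_preds vs (outs i0 A aD s l m f) = [::]].
Proof.
elim=> [|o l IH] m vs f Hm Hs H1 HD RD D0 Dd Hf /=.
  by split => // o; apply: Hf.
have [ws [W1 W2 W3 [uN HuN RN]]] := comp_sym (Nexp i0 A o) Hm Hs H1 mdeg1.
set c := comp s m (Nexp i0 A o).
have HD1 : gj_sget (vs ++ ws) aD = Some uD by apply: sget_cat.
have [S1 S2 S3] := wf_step GDiv (outs i0 A aD s l (m + size c.1).+1 (upd f o (GVal (m + size c.1))))
   HuN HD1.
set w := gj_sapply GDiv uN uD.
have Hm' : size (rcons (vs ++ ws) w) = (m + size c.1).+1.
  by rewrite size_rcons size_cat Hm W1.
have Hs' : (s < (m + size c.1).+1)%N by apply: leq_trans Hs _; rewrite -addnS leq_addr.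
have H1' : rep (nth (0, 1) (rcons (vs ++ ws) w) s) 1.
  by rewrite nth_rcons size_cat Hm (leq_trans Hs (leq_addr _ _)) nth_cat Hm Hs.
have HD' : gj_sget (rcons (vs ++ ws) w) aD = Some uD by rewrite -cats1; apply: sget_cat.
have Hf' : forall o', o' \notin l ->
    gj_sget (rcons (vs ++ ws) w) (upd f o (GVal (m + size c.1)) o') <> None.
  move=> o'; rewrite /upd; case: eqP => [-> _ | ne no'].
    by rewrite /= size_rcons size_cat Hm W1 ltnSn.
  have := Hf o'; rewrite inE negb_or no' andbT => /(_ (introN eqP ne)).
  case E: (gj_sget vs (f o')) => [v|] // _.
  by rewrite -cats1 (sget_cat _ (sget_cat _ E)).
have [I1 I2 I3] := IH _ _ _ Hm' Hs' H1' HD' RD D0 Dd Hf'.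
have [A1 A2 A3] := W2 O (GStep GDiv c.2 aD
   (outs i0 A aD s l (m + size c.1).+1 (upd f o (GVal (m + size c.1))))).
split.
- rewrite A1 S1; split; last exact: I1.
  by move=> _; case: RD => d2 d1; apply/eqP; rewrite d1 mulf_neq0.
- move=> u; rewrite A2 S2 mem_cat inE => /or3P [/W3 [P RP DP] | /eqP -> | /I2 //].
    apply: rep_deg RP _; apply: leq_trans DP (fdeg_N i0 k1 A o).
  apply: div_deg RN RD D0 _ Dd.
  by apply: leq_trans (mdeg_eeval _ mdeg1) (fdeg_N i0 k1 A o).
- by rewrite A3 S3.
Qed.

Lemma Dp_neq0 (A : {set 'I_k}) : (0 < #|A|)%N -> (#|A| <= d)%N ->
  eeval (@Xv R n) 0 (dexp i0 (Gexp i0 A)) != 0.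
Proof.
move=> r0 rd.
pose W : 'M[R]_(#|A|, d) := pid_mx #|A|.
pose Z0 : 'M[R]_(k, d) :=
  \matrix_(a, t) \sum_(j : 'I_#|A|) ((enum_val j == a)%:R * W j t).
have BZ : Bm Z0 A = W.
  apply/matrixP => j t; rewrite [LHS]mxE [LHS]mxE (bigD1 j) //= eqxx mul1r big1 ?addr0 // => j' nj.
  by rewrite (inj_eq enum_val_inj) (negbTE nj) mul0r.
have WW : W *m W^T = 1%:M.
  rewrite /W tr_pid_mx mul_pid_mx minnn.
  by rewrite (minn_idPr rd) pid_mx_1.
pose pt := fun i => mxvec Z0 0 i.
apply/eqP => H.
have := congr1 (meval pt) H.
rewrite meval0 (eeval_morph (meval pt)) rmorph0.
rewrite (eeval_ext (y := pt)); last by move=> i; rewrite /= mevalXU.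
rewrite (ev_dexp i0 pt (Gexp i0 A)) ?r0 // ev_Gexp Zx_mxvec BZ WW det1 => /eqP.
by rewrite oner_eq0.
Qed.

Lemma final_sym (A : {set 'I_k}) m (vs : seq rf) :
  size vs = m -> (0 < m)%N -> rep (nth (0, 1) vs 0) 0 -> (#|A| <= d)%N ->
  [/\ gj_wf vs (final i0 A m),
      forall u, u \in gj_values vs (final i0 A m) -> ratf_deg_le (4 * k) u
    & gj_preds vs (final i0 A m) = [::]].
Proof.
move=> Hm Hm0 H0 Ad; rewrite /final; case: eqP => [A0 | A0].
  by split => //= _; rewrite Hm Hm0.
have r0 : (0 < #|A|)%N by rewrite lt0n; apply/eqP.
have [ws [W1 W2 W3 [uD HuD RD]]] := comp_sym (dexp i0 (Gexp i0 A)) Hm Hm0 H0 mdeg0.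
have D0 := Dp_neq0 r0 Ad.
have DD : (fdeg (dexp i0 (Gexp i0 A)) <= 4 * k)%N.
  by apply: leq_trans (fdeg_D i0 k1 A) _; lia.
have Dd := leq_trans (mdeg_eeval (dexp i0 (Gexp i0 A)) mdeg0) DD.
set cD := comp 0 m (dexp i0 (Gexp i0 A)).
set m1 := (m + size cD.1)%N.
have [S1 S2 S3] := wf_step GDiv (outs i0 A cD.2 m1 (enum (@predT O)) m1.+1 (fun _ => GVal 0))
   HuD HuD.
set one := gj_sapply GDiv uD uD.
have Hm' : size (rcons (vs ++ ws) one) = m1.+1 by rewrite size_rcons size_cat Hm W1.
have H1 : rep (nth (0, 1) (rcons (vs ++ ws) one) m1) 1.
  rewrite nth_rcons size_cat Hm W1 /m1 /cD ltnn eqxx; exact: rep_one RD D0.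
have HD' : gj_sget (rcons (vs ++ ws) one) cD.2 = Some uD.
  by rewrite -cats1; apply: (sget_cat _ HuD).
have Hf : forall o, o \notin enum (@predT O) ->
   gj_sget (rcons (vs ++ ws) one) ((fun _ => GVal 0) o) <> None.
  by move=> o; rewrite mem_enum.
have [I1 I2 I3] := outs_sym A Hm' (ltnSn _) H1 HD' RD D0 Dd Hf.
have [A1 A2 A3] := W2 O (GStep GDiv cD.2 cD.2
   (outs i0 A cD.2 m1 (enum (@predT O)) m1.+1 (fun _ => GVal 0))).
split.
- rewrite A1 S1; split; last exact: I1.
  by move=> _; case: RD => d2 d1; apply/eqP; rewrite d1 mulf_neq0.
- move=> u; rewrite A2 S2 mem_cat inE => /or3P [/W3 [P RP DP] | /eqP -> | /I2 //].
    by apply: rep_deg RP _; apply: leq_trans DP DD.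
  by apply: rep_deg (rep_one RD D0) _; rewrite mdeg1.
- by rewrite A3 S3.
Qed.

Definition Lpred : seq rf :=
  [seq (eeval (@Xv R n) 0 (texp i0 A), 1) | A <- enum (powerset [set: 'I_k])].

Lemma greedy_sym (l : seq 'I_k) : forall (S : {set 'I_k}) m (vs : seq rf),
  size vs = m -> (0 < m)%N -> rep (nth (0, 1) vs 0) 0 -> (#|S| <= d)%N ->
  [/\ gj_wf vs (greedy i0 l S m),
      forall u, u \in gj_values vs (greedy i0 l S m) -> ratf_deg_le (4 * k) u
    & forall u, u \in gj_preds vs (greedy i0 l S m) -> exists2 v, v \in Lpred & ratf_eq u v].
Proof.
elim: l => [|i l IH] S m vs Hm Hm0 H0 Sd /=.
  by have [F1 F2 F3] := final_sym Hm Hm0 H0 Sd; split => //; rewrite F3.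
case: ltnP => HS; last first.
  by have [F1 F2 F3] := final_sym Hm Hm0 H0 Sd; split => //; rewrite F3.
set T := i |: S.
have [ws [W1 W2 W3 [u Hu Ru]]] := comp_sym (texp i0 T) Hm Hm0 H0 mdeg0.
set c := comp 0 m (texp i0 T).
have Hm' : size (vs ++ ws) = (m + size c.1)%N by rewrite size_cat Hm W1.
have Hm0' : (0 < m + size c.1)%N by apply: leq_trans Hm0 (leq_addr _ _).
have H0' : rep (nth (0, 1) (vs ++ ws) 0) 0 by rewrite nth_cat Hm Hm0.
have Td : (#|T| <= d)%N.
  rewrite cardsU1; apply: leq_trans (leq_add (leq_b1 _) (leqnn _)) _; exact: HS.
have [P1 P2 P3] := IH S _ _ Hm' Hm0' H0' Sd.
have [Q1 Q2 Q3] := IH T _ _ Hm' Hm0' H0' Td.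
have [A1 A2 A3] := W2 O (GIf c.2 (greedy i0 l S (m + size c.1)) (greedy i0 l T (m + size c.1))).
split.
- rewrite A1; split; [by rewrite Hu | by split].
- move=> v; rewrite A2 mem_cat => /orP [/W3 [P RP DP] | ].
    by apply: rep_deg RP _; apply: leq_trans DP (fdeg_T i0 k1 T).
  by rewrite /= mem_cat => /orP [/P2 | /Q2].
- move=> v; rewrite A3 (preds_if _ _ Hu) inE mem_cat => /or3P [/eqP -> | /P3 // | /Q3 //].
  exists (eeval (@Xv R n) 0 (texp i0 T), 1).
    by apply: map_f; rewrite mem_enum powersetE subsetT.
  by case: Ru => _ E; rewrite /ratf_eq mulr1 E.
Qed.

End SymProg.

Theorem lemma5p2 (R : realType) :
  exists C : nat, forall k d : nat, (1 <= k)%N -> (1 <= d)%N ->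
    (exists p : gj (k * d) ('I_d * 'I_d),
       [/\ gj_computes_pinv_proj (fun _ : 'M[R]_(k, d) => True) p,
           gj_degree_le R (C * k) p
         & gj_predcomp_le R (2 ^ k) p]) /\
    (exists p : gj (k * d) ('I_d * 'I_d),
       [/\ gj_computes_pinv_proj (fun Z : 'M[R]_(k, d) => \rank Z = k) p,
           gj_degree_le R (C * k) p
         & gj_predcomp_le R 0 p]).
Proof.
exists 4%N => k d k1 d1.
have nd : (0 < k * d)%N by rewrite muln_gt0 k1 d1.
pose i0 : 'I_(k * d) := Ordinal nd.
pose w0 : ratf R (k * d) := gj_sapply GSub ('X_i0, 1) ('X_i0, 1).
have Rw0 : rep w0 0.
  split; first by rewrite /= mulr1 oner_neq0.
  by rewrite /= subrr mul0r.
have Dw0 : ratf_deg_le (4 * k) w0 by apply: rep_deg Rw0 _; rewrite mdeg0.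
have S0 : size [:: w0] = 1%N by [].
have Rn0 : rep (nth (0, 1) [:: w0] 0) 0 by [].
split.
- exists (prog1 i0).
  have c0 : (#|(set0 : {set 'I_k})| <= d)%N by rewrite cards0.
  have [G1 G2 G3] := greedy_sym i0 k1 (enum 'I_k) S0 (ltnSn 0) Rn0 c0.
  split.
  + split; first by split.
    move=> Z _; rewrite /prog1 /=.
    have rf0 : row_free (Bm Z set0).
      rewrite /row_free eqn_leq rank_leq_row /=.
      by apply: (@leq_trans 0%N) => //; rewrite cards0.
    have Hj : forall j, j \notin enum 'I_k -> (row j Z <= Bm Z set0)%MS.
      by move=> j; rewrite mem_enum.
    apply: greedy_run rf0 c0 Hj => //=; by rewrite subrr.
  + move=> u; rewrite /prog1 /= inE => /orP [/eqP -> // | /G2 //].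
  + exists (Lpred R i0); split.
      by rewrite size_map -cardE card_powerset cardsT card_ord.
    by move=> u /= /G3.
- exists (prog2 i0); rewrite /prog2; case: ifP => kd.
    have kA : (#|[set: 'I_k]| <= d)%N by rewrite cardsT card_ord.
    have [F1 F2 F3] := final_sym i0 k1 S0 (ltnSn 0) Rn0 kA.
    split.
    + split; first by split.
      move=> Z rZ /=.
      have sZ : (Z <= Bm Z [set: 'I_k])%MS.
        by apply/row_subP => j; apply: row_in_Bm; rewrite in_setT.
      apply: final_run => //=; first by rewrite subrr.
      have c : #|[set: 'I_k]| = k by rewrite cardsT card_ord.
      have r1 := mxrankS sZ.
      have r2 := rank_leq_row (Bm Z [set: 'I_k]).
      rewrite /row_free eqn_leq r2 /=; apply: leq_trans _ r1; by rewrite rZ c.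
    + move=> u /=; rewrite inE => /orP [/eqP -> // | /F2 //].
    + exists [::]; split => // u /=; by rewrite F3.
  split.
  + split => //= Z rZ; exfalso.
    have := rank_leq_col Z; rewrite rZ; move/negbT: kd; rewrite -ltnNge.
    by move=> h1 h2; move: (leq_trans h1 h2); rewrite ltnn.
  + by move=> u.
  + by exists [::].
Qed.
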